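(* For every hypothesis class $\mathcal H$ with VC dimension $d\in\mathbb N\cup\{\infty\}$, $N^{np}_{\mathcal H}(n)=\tilde\Omega(\min(d,n))$.
   Context: Let $\mathcal X$ be a domain, $\mathcal Z=\mathcal X\times\{\pm1\}$, $\mathcal Z^*$ the set of samples (finite sequences of examples). Alice holds sample $S_a$, Bob holds $S_b$, joint sample $S=(S_a,S_b)$ of size $n$. $S$ is realizable by $\mathcal H\subseteq\{\pm1\}^{\mathcal X}$ if some $h\in\mathcal H$ agrees with all its examples. The non-deterministic sample complexity satisfies $N^{np}_{\mathcal H}(n)\le T(n)$ if there are predicates $A,B:\mathcal Z^*\times\mathcal Z^*\to\{\mathsf{True},\mathsf{False}\}$ such that for every realizable $S=(S_a,S_b)$ of size $n$ there is a proof $P$, a sequence of $T(n)$ examples each appearing in $S$, with $A(S_a,P)=B(S_b,P)=\mathsf{True}$, and for every non-realizable $S$ of size $n$ and every $P\in\mathcal Z^{T(n)}$, $A(S_a,P)=\mathsf{False}$ or $B(S_b,P)=\mathsf{False}$; $N^{np}_{\mathcal H}(n)$ is the least such $T(n)$. $\tilde\Omega$ hides logarithmic factors. *)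

(* Defs.v *)
From Stdlib Require Import Reals List Arith.
Import ListNotations.
Set Implicit Arguments.

(** Examples: pairs (x, y) with label y : bool (true = +1, false = -1). *)
Definition example (X : Type) : Type := (X * bool)%type.
Definition sample (X : Type) : Type := list (example X).

Definition hclass (X : Type) : Type := (X -> bool) -> Prop.

Definition consistent X (h : X -> bool) (S : sample X) : Prop :=
  forall z, In z S -> h (fst z) = snd z.

Definition realizable X (H : hclass X) (S : sample X) : Prop :=
  exists h, H h /\ consistent h S.

Definition shatters X (H : hclass X) (xs : list X) : Prop :=
  NoDup xs /\
  forall f : X -> bool, exists h, H h /\ forall x, In x xs -> h x = f x.

(** VC dimension, valued in N ∪ {∞}: [Some d] is d, [None] is ∞. *)
Definition VCdim X (H : hclass X) (d : option nat) : Prop :=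
  match d with
  | Some d => (exists xs, shatters H xs /\ length xs = d) /\
              (forall xs, shatters H xs -> length xs <= d)
  | None => forall m, exists xs, shatters H xs /\ length xs = m
  end.

Definition min_ext (d : option nat) (n : nat) : nat :=
  match d with Some d => Nat.min d n | None => n end.

(** [np_upper H n T] : N^np_H(n) <= T, i.e. there are predicates A, B
    such that every realizable joint sample (S_a, S_b) of size n has a
    proof P of T examples, each appearing in S, accepted by both, and for
    every non-realizable one, every P of length T is rejected by one party. *)
Definition np_upper X (H : hclass X) (n T : nat) : Prop :=
  exists (A B : sample X -> sample X -> bool),
    forall Sa Sb : sample X, length Sa + length Sb = n ->
      (realizable H (Sa ++ Sb) ->
         exists P : sample X, length P = T /\
           (forall z, In z P -> In z (Sa ++ Sb)) /\
           A Sa P = true /\ B Sb P = true) /\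
      (~ realizable H (Sa ++ Sb) ->
         forall P : sample X, length P = T ->
           A Sa P = false \/ B Sb P = false).

(* Main.v *)
Require Import Defs.
From Stdlib Require Import Reals List Arith Lia ClassicalEpsilon Classical Lra.
Import ListNotations.

Fixpoint words {A} (L : list A) (t : nat) : list (list A) :=
  match t with
  | 0 => [[]]
  | S t => flat_map (fun x => map (cons x) (words L t)) L
  end.

Lemma words_length A (L : list A) t : length (words L t) = length L ^ t.
Proof.
  induction t as [|t IH]; simpl; auto.
  rewrite <- IH. generalize (words L t). intros W. clear IH. induction L as [|x L IHL]; simpl; auto.
  rewrite length_app, length_map, IHL. lia.
Qed.

Lemma words_in A (L : list A) P : incl P L -> In P (words L (length P)).
Proof.
  induction P as [|x P IH]; simpl; intros Hi; auto.
  apply in_flat_map. exists x. split.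
  - apply Hi; simpl; auto.
  - apply in_map. apply IH. intros y Hy; apply Hi; simpl; auto.
Qed.

Lemma nodup_map_inj A B (f : A -> B) l :
  NoDup l -> (forall a b, In a l -> In b l -> f a = f b -> a = b) -> NoDup (map f l).
Proof.
  induction l as [|a l IH]; simpl; intros Hn Hi; constructor.
  - inversion Hn; subst. intros Hin. apply in_map_iff in Hin as [b [Hb Hbl]].
    assert (b = a) by (apply Hi; auto). subst. contradiction.
  - inversion Hn; subst. apply IH; auto.
Qed.

Lemma high_bit k m i : k < 2 ^ m -> m <= i -> Nat.testbit k i = false.
Proof.
  intros Hk Hi. rewrite <- (Nat.mod_small k (2 ^ m)) by auto.
  apply Nat.mod_pow2_bits_high; auto.
Qed.

Lemma core X (H : hclass X) (xs : list X) m n T :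
  shatters H xs -> 1 <= m -> m <= length xs -> 2 * m <= n ->
  np_upper H n T -> 2 ^ m <= (2 * m) ^ T.
Proof.
  intros [Hnd Hsh] Hm1 Hmx Hmn [A [B HAB]].
  destruct xs as [|x0 xs0] eqn:Exs; [simpl in Hmx; lia|].
  rewrite <- Exs in *.
  set (p := fun i => nth i xs x0).
  assert (Hpin : forall i, i < m -> In (p i) xs) by (intros; apply nth_In; lia).
  assert (Hpinj : forall i j, i < m -> j < m -> p i = p j -> i = j).
  { intros i j Hi Hj E. apply (proj1 (NoDup_nth xs x0) Hnd); auto; lia. }
  set (base := fun k => map (fun i => (p i, Nat.testbit k i)) (seq 0 m)).
  set (Sa := fun k => base k ++ repeat (p 0, Nat.testbit k 0) (n - 2 * m)).
  assert (Hlen : forall k k', length (Sa k) + length (base k') = n).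
  { intros. unfold Sa, base. rewrite length_app, repeat_length, !length_map, length_seq. lia. }
  assert (Hmem : forall k k' z, In z (Sa k ++ base k') ->
     exists i, i < m /\ (z = (p i, Nat.testbit k i) \/ z = (p i, Nat.testbit k' i))).
  { intros k k' z Hz. apply in_app_or in Hz as [Hz|Hz].
    - unfold Sa in Hz. apply in_app_or in Hz as [Hz|Hz].
      + unfold base in Hz. apply in_map_iff in Hz as [i [Ei Hi]].
        apply in_seq in Hi. exists i; split; [lia|auto].
      + apply repeat_spec in Hz. exists 0; split; [lia|auto].
    - unfold base in Hz. apply in_map_iff in Hz as [i [Ei Hi]].
      apply in_seq in Hi. exists i; split; [lia|auto]. }
  assert (Hbase : forall k i, i < m -> In (p i, Nat.testbit k i) (base k)).
  { intros k i Hi. unfold base. apply in_map_iff. exists i; split; auto.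
    apply in_seq; lia. }
  assert (HR : forall k, realizable H (Sa k ++ base k)).
  { intros k.
    set (f := fun x => if excluded_middle_informative
                 (exists i, i < m /\ p i = x /\ Nat.testbit k i = true) then true else false).
    destruct (Hsh f) as [h [Hh Hagree]]. exists h; split; auto.
    intros z Hz. destruct (Hmem k k z Hz) as [i [Hi Ez]].
    assert (Ez' : z = (p i, Nat.testbit k i)) by (destruct Ez; auto). subst z. simpl.
    rewrite Hagree by (apply Hpin; auto). unfold f.
    destruct excluded_middle_informative as [[j [Hj [Ej Tj]]]|Hne].
    - assert (j = i) by (apply Hpinj; auto). subst; auto.
    - destruct (Nat.testbit k i) eqn:E; auto. exfalso; apply Hne; eauto. }
  assert (HNR : forall k k', k < 2 ^ m -> k' < 2 ^ m -> k <> k' ->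
             ~ realizable H (Sa k ++ base k')).
  { intros k k' Hk Hk' Hne [h [_ Hc]].
    assert (Hex : exists i, i < m /\ Nat.testbit k i <> Nat.testbit k' i).
    { apply NNPP; intros Hn. apply Hne. apply Nat.bits_inj. intros i.
      destruct (le_lt_dec m i) as [Hi|Hi].
      - rewrite (high_bit k m i), (high_bit k' m i); auto.
      - apply NNPP; intros Hd; apply Hn; eauto. }
    destruct Hex as [i [Hi Hd]]. apply Hd.
    assert (E1 := Hc (p i, Nat.testbit k i)). assert (E2 := Hc (p i, Nat.testbit k' i)).
    simpl in E1, E2. rewrite <- E1, <- E2; auto.
    - apply in_or_app; right; auto.
    - apply in_or_app; left; unfold Sa; apply in_or_app; left; auto. }
  set (L := map (fun i => (p i, true)) (seq 0 m) ++ map (fun i => (p i, false)) (seq 0 m)).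
  assert (HL : forall k k' z, In z (Sa k ++ base k') -> In z L).
  { intros k k' z Hz. destruct (Hmem k k' z Hz) as [i [Hi Ez]].
    assert (Hz' : exists b, z = (p i, b)) by (destruct Ez; eauto).
    destruct Hz' as [[|] ->]; unfold L; apply in_or_app; [left|right];
      apply in_map_iff; exists i; split; auto; apply in_seq; lia. }
  assert (Hchoice : forall k, exists P, k < 2 ^ m ->
     length P = T /\ incl P L /\ A (Sa k) P = true /\ B (base k) P = true).
  { intros k. destruct (classic (k < 2 ^ m)) as [Hk|Hk].
    - destruct (proj1 (HAB (Sa k) (base k) (Hlen k k)) (HR k)) as [P [HP1 [HP2 [HP3 HP4]]]].
      exists P; intros _; repeat split; auto. intros z Hz; eapply HL; eauto.
    - exists []; intros; contradiction. }
  assert (Hf : {f : nat -> sample X | forall k, k < 2 ^ m ->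
     length (f k) = T /\ incl (f k) L /\ A (Sa k) (f k) = true /\ B (base k) (f k) = true}).
  { exists (fun k => proj1_sig (constructive_indefinite_description _ (Hchoice k))).
    intros k Hk. exact (proj2_sig (constructive_indefinite_description _ (Hchoice k)) Hk). }
  destruct Hf as [f Hf].
  assert (HLlen : length L = 2 * m).
  { unfold L. rewrite length_app, !length_map, length_seq. lia. }
  enough (Hfin : length (map f (seq 0 (2 ^ m))) <= length (words L T)).
  { rewrite length_map, length_seq, words_length, HLlen in Hfin. exact Hfin. }
  apply NoDup_incl_length.
  - apply nodup_map_inj; [apply seq_NoDup|].
    intros a b Ha Hb E. apply in_seq in Ha, Hb.
    destruct (Nat.eq_dec a b) as [|Hne]; auto. exfalso.
    destruct (Hf a) as [Ta [_ [HA _]]]; [lia|].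
    destruct (Hf b) as [_ [_ [_ HB]]]; [lia|].
    destruct (proj2 (HAB (Sa a) (base b) (Hlen a b)) (HNR a b ltac:(lia) ltac:(lia) Hne) (f a) Ta)
      as [F|F]; [congruence|]. rewrite E in F. congruence.
  - intros P HP. apply in_map_iff in HP as [k [<- Hk]]. apply in_seq in Hk.
    destruct (Hf k) as [Tk [Ik _]]; [lia|]. rewrite <- Tk. apply words_in; auto.
Qed.

Open Scope R_scope.
Lemma ln_le' x y : 0 < x -> x <= y -> ln x <= ln y.
Proof. intros Hx Hxy. destruct (Rle_lt_or_eq_dec _ _ Hxy) as [H|H].
  - left; apply ln_increasing; auto. - subst; lra. Qed.

Lemma ln2_gt : 1/2 < ln 2.
Proof.
  assert (E : ln 4 = 2 * ln 2).
  { replace 4 with (2 ^ 2) by lra. rewrite ln_pow by lra. simpl; lra. }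
  assert (H1 : 1 <= ln 3).
  { rewrite <- (ln_exp 1). apply ln_le'. apply exp_pos. apply exp_le_3. }
  assert (H2 : ln 3 < ln 4) by (apply ln_increasing; lra). lra.
Qed.

Lemma final_real (m n T mv : nat) :
  (2 ^ m <= (2 * m) ^ T)%nat -> (1 <= m)%nat -> (2 * m <= n)%nat -> (mv <= 3 * m)%nat ->
  1/6 * INR mv <= INR T * ln (INR n) ^ 1.
Proof.
  intros Hp Hm Hmn Hmv.
  apply le_INR in Hp, Hmn, Hmv, Hm. rewrite !pow_INR in Hp. rewrite mult_INR in Hmv, Hmn, Hp.
  simpl in Hm, Hmv, Hmn, Hp.
  assert (Hp' : ln (2 ^ m) <= ln ((2 * INR m) ^ T)) by (apply ln_le'; [apply pow_lt; lra | exact Hp]).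
  rewrite !ln_pow in Hp' by lra.
  assert (Hl : ln (2 * INR m) <= ln (INR n)) by (apply ln_le'; lra).
  assert (HT := pos_INR T).
  assert (Hl2 := ln2_gt).
  assert (INR T * ln (2 * INR m) <= INR T * ln (INR n)) by (apply Rmult_le_compat_l; lra).
  assert (INR m * (1/2) <= INR m * ln 2) by (apply Rmult_le_compat_l; lra).
  simpl. lra.
Qed.

Theorem theorem6 :
  exists (c : R) (k n0 : nat), 0 < c /\
    forall (X : Type) (H : hclass X) (d : option nat) (n T : nat),
      VCdim H d -> (n0 <= n)%nat -> np_upper H n T ->
      c * INR (min_ext d n) <= INR T * (ln (INR n)) ^ k.
Proof.
  exists (1/6), 1%nat, 2%nat. split; [lra|].
  intros X H d n T Hvc Hn Hnp.
  assert (Hex : exists dd xs, shatters H xs /\ length xs = dd /\ min_ext d n = Nat.min dd n).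
  { destruct d as [dd|]; simpl in Hvc.
    - destruct Hvc as [[xs [Hs Hl]] _]. exists dd, xs; auto.
    - destruct (Hvc n) as [xs [Hs Hl]]. exists n, xs; simpl; rewrite Nat.min_id; auto. }
  destruct Hex as [dd [xs [Hs [Hl Hmin]]]]. rewrite Hmin.
  assert (Hdm := Nat.div_mod n 2 ltac:(lia)). assert (Hmb := Nat.mod_upper_bound n 2 ltac:(lia)).
  destruct (Nat.eq_dec (Nat.min dd (n / 2)%nat) 0%nat) as [H0|H0].
  - assert (Hz : Nat.min dd n = 0%nat) by lia. rewrite Hz. simpl.
    assert (0 <= ln (INR n)).
    { rewrite <- ln_1. apply ln_le'; [lra|]. apply (le_INR 1); lia. }
    assert (HT := pos_INR T).
    assert (0 <= INR T * ln (INR n)) by (apply Rmult_le_pos; auto). simpl; rewrite ?Rmult_1_r; lra.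
  - apply (final_real (Nat.min dd (n / 2)%nat)).
    + apply (core _ H xs (Nat.min dd (n / 2)%nat) n T); auto; lia.
    + lia.
    + lia.
    + lia.
Qed.
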